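(* With the setup in the context, assume $Q>2m$ and $Q\ge1$. Choose $N$ so that $v_1:=v\in N$ and every non-fixed vertex $x$ with $\mathrm{dist}(v_1,x)<\mathrm{dist}(v_1',x)$ lies in $N$ (vertices with $\mathrm{dist}(v_1,x)=\mathrm{dist}(v_1',x)$ may be placed arbitrarily). Label $N=\{v_1,\dots,v_k\}$ and define $y\in\mathbb{R}^k$ by $$y_i=\begin{cases}Q^{-\mathrm{dist}(v_1,v_i)} & \text{if } \mathrm{dist}(v_1,v_i)<\mathrm{dist}(v_1',v_i),\\ 0 & \text{if } \mathrm{dist}(v_1,v_i)=\mathrm{dist}(v_1',v_i).\end{cases}$$ Then the second largest eigenvalue $\lambda_2$ of $H$ satisfies $$\lambda_2\ \ge\ Q-\frac{1+\sum_{i\ne 1}\big(\deg_{N\cup\sigma N}(v_i)-1\big)y_i^2}{\sum_i y_i^2}.$$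
   Context: $G$ is a finite, simple, connected graph with vertex set $V$, maximum degree $m$, and an involution $\sigma$ (a bijection $V\to V$ with $\sigma\circ\sigma=\mathrm{id}$ such that $x\sim y$ implies $\sigma(x)\sim\sigma(y)$); write $x'=\sigma(x)$. Fix $v\in V$ with $v'\ne v$, and let $H=A_G+D_Q$ (adjacency matrix plus diagonal potential) with potential $Q$ at $v$ and $v'$ and $0$ elsewhere. $S=\{x: x'=x\}$ is the set of fixed vertices, $N$ is a set containing exactly one vertex from each pair $\{x,x'\}$ with $x\ne x'$, $|N|=k$, and $\sigma N=\{x':x\in N\}$. $\mathrm{dist}$ is graph distance and $\deg_{N\cup\sigma N}(v_i)$ is the number of neighbours of $v_i$ in $N\cup\sigma N$. The eigenvalues of $H$ are $\lambda_1\ge\lambda_2\ge\dots\ge\lambda_n$. *)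

(* Defs.v *)
From mathcomp Require Import all_boot all_order all_algebra.
Set Implicit Arguments. Unset Strict Implicit. Unset Printing Implicit Defensive.
Import Order.TTheory GRing.Theory Num.Theory.
Local Open Scope ring_scope.

Definition simple_graph n (e : rel 'I_n) : Prop :=
  symmetric e /\ irreflexive e.

Definition connected_graph n (e : rel 'I_n) : Prop :=
  forall x y, connect e x y.

Fixpoint ball n (e : rel 'I_n) (k : nat) (x : 'I_n) : {set 'I_n} :=
  match k with
  | 0 => [set x]
  | k'.+1 => ball e k' x :|: [set z | [exists w in ball e k' x, e w z]]
  end.

(* graph distance: least k with y in ball e k x (for a connected graph, k < n) *)
Definition dist n (e : rel 'I_n) (x y : 'I_n) : nat :=
  find (fun k => y \in ball e k x) (iota 0 n).

Definition degree n (e : rel 'I_n) (x : 'I_n) : nat := #|[set z | e x z]|.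

Definition max_degree n (e : rel 'I_n) : nat := \max_(x : 'I_n) degree e x.

Definition deg_in n (e : rel 'I_n) (A : {set 'I_n}) (x : 'I_n) : nat :=
  #|[set z in A | e x z]|.

Definition graph_involution n (e : rel 'I_n) (s : 'I_n -> 'I_n) : Prop :=
  involutive s /\ (forall x y, e x y -> e (s x) (s y)).

Definition adj_mx (R : nzRingType) n (e : rel 'I_n) : 'M[R]_n :=
  \matrix_(i, j) (e i j)%:R.

Definition Hmx (R : nzRingType) n (e : rel 'I_n) (s : 'I_n -> 'I_n)
  (v : 'I_n) (Q : R) : 'M[R]_n :=
  adj_mx R e + \matrix_(i, j) (((i == j) && ((i == v) || (i == s v)))%:R * Q).

(* s is the list of eigenvalues (with algebraic multiplicity) of A *)
Definition is_spectrum (R : nzRingType) n (A : 'M[R]_n) (s : seq R) : Prop :=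
  char_poly A = \prod_(a <- s) ('X - a%:P).

(* i-th largest eigenvalue (0-based): lambda_{i+1} *)
Definition eig_desc (R : realDomainType) (s : seq R) (i : nat) : R :=
  nth 0 (sort (fun a b : R => b <= a) s) i.

(* Main.v *)
Require Import Defs.
From mathcomp Require Import all_boot all_order all_algebra.
From mathcomp Require Import complex.
From mathcomp Require Import ring lra.
Import Order.TTheory GRing.Theory Num.Theory.
Local Open Scope ring_scope.
Lemma eig_desc_ge (R : realDomainType) (s : seq R) (c : R) :
  (1 < count (fun a : R => (c <= a)%R) s)%N -> c <= eig_desc s 1.
Proof.
move=> hc; rewrite /eig_desc.
set t := sort _ s.
have pt : perm_eq t s by rewrite perm_sort.
have st : sorted (fun a b : R => b <= a) t.
  apply: sort_sorted => a b; exact: le_total.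
rewrite -(permP pt) in hc.
case: t pt st hc => [|a [|b t]] //= pt st hc.
  by move: hc; case: (c <= a).
rewrite leNgt; apply/negP => hb.
have allt : all (fun x => x < c) (b :: t).
  apply/allP => x xin.
  have [i ilt ->] : exists2 i, (i < size (b :: t))%N & x = nth 0 (b :: t) i.
    by exists (index x (b :: t)); rewrite ?index_mem ?nth_index.
  apply: le_lt_trans hb.
  have st' : sorted (fun a b : R => b <= a) (b :: t) by move: st => /= /andP[].
  have tr : transitive (fun a b : R => b <= a).
    by move=> x1 y1 z1 h1 h2; exact: le_trans h2 h1.
  have := @sorted_leq_nth _ (fun a b : R => b <= a) tr (fun x => lexx x) 0 _ st' 0 i.
  by rewrite !inE /= => /(_ isT ilt (leq0n _)).
have : count (fun a : R => (c <= a)%R) (b :: t) = 0%N.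
  apply/eqP; rewrite -leqn0 leqNgt -has_count; apply/hasPn => x /(allP allt).
  by rewrite leNgt => ->.
move: hc; rewrite /= => hc h0; rewrite h0 in hc.
by move: hc; case: (c <= a).
Qed.
Lemma char_poly_conj (R : comUnitRingType) n (P D : 'M[R]_n) :
  P \in unitmx -> char_poly (invmx P *m D *m P) = char_poly D.
Proof.
move=> Pu; rewrite /char_poly.
have hX : map_mx polyC (invmx P) *m 'X%:M *m map_mx polyC P = 'X%:M.
  by rewrite mul_mx_scalar -scalemxAl -map_mxM mulVmx // map_mx1 scalemx1.
have -> : char_poly_mx (invmx P *m D *m P) =
  map_mx polyC (invmx P) *m char_poly_mx D *m map_mx polyC P.
  by rewrite /char_poly_mx mulmxBr mulmxBl -!map_mxM hX.
rewrite !det_mulmx mulrAC !det_map_mx -rmorphM -det_mulmx mulVmx //.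
by rewrite det1 rmorph1 mul1r.
Qed.

Lemma char_poly_diag (R : comNzRingType) n (d : 'rV[R]_n) :
  char_poly (diag_mx d) = \prod_(i < n) ('X - (d 0 i)%:P).
Proof.
rewrite char_poly_trig ?diag_mx_is_trig //.
by apply: eq_bigr => i _; rewrite mxE eqxx mulr1n.
Qed.
Local Open Scope sesquilinear_scope.
Lemma qf_expand (C : numClosedFieldType) n (B : 'M[C]_n) (u w : 'rV[C]_n) (a b : C) :
  ((a *: u + b *: w) *m B *m (a *: u + b *: w)^t*) 0 0 =
  a * a^* * (u *m B *m u^t*) 0 0 + a * b^* * (u *m B *m w^t*) 0 0
  + (b * a^* * (w *m B *m u^t*) 0 0 + b * b^* * (w *m B *m w^t*) 0 0).
Proof.
rewrite linearD /= !linearZ /= map_mxD !map_mxZ /=.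
rewrite !mulmxDl !mulmxDr -!scalemxAl -!scalemxAr !scalerA !mxE.
by [].
Qed.
Lemma trCmul (C : numClosedFieldType) m n p (x : 'M[C]_(m, n)) (M : 'M[C]_(p, n)) :
  (x *m M^t*)^t* = M *m x^t*.
Proof.
by rewrite trmx_mul map_mxM trmxCK.
Qed.

Lemma courant2 (C : numClosedFieldType) n (A P : 'M[C]_n) (d : 'rV[C]_n)
  (u w : 'rV[C]_n) (c : C) :
  P \is unitarymx -> A = invmx P *m diag_mx d *m P ->
  (forall i, d 0 i \is Num.real) -> c \is Num.real ->
  (forall a b : C, a *: u + b *: w = 0 -> a = 0 /\ b = 0) ->
  (u *m A *m w^t*) 0 0 = 0 -> (w *m A *m u^t*) 0 0 = 0 ->
  (u *m w^t*) 0 0 = 0 -> (w *m u^t*) 0 0 = 0 ->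
  c * (u *m u^t*) 0 0 <= (u *m A *m u^t*) 0 0 ->
  c * (w *m w^t*) 0 0 <= (w *m A *m w^t*) 0 0 ->
  (1 < #|[set i | (c <= d 0 i)%R]|)%N.
Proof.
move=> Pun hA dreal creal indep fuw fwu guw gwu fu fw.
rewrite ltnNge; apply/negP => /card_le1_eqP hJ.
have n0 : (0 < n)%N.
  rewrite lt0n; apply/negP => /eqP n0.
  have u0 : u = 0 by apply/matrixP => i [k hk]; exfalso; move: hk; rewrite n0.
  have w0 : w = 0 by apply/matrixP => i [k hk]; exfalso; move: hk; rewrite n0.
  have [] := indep 1 0; first by rewrite u0 w0 !scaler0 addr0.
  by move=> /eqP; rewrite oner_eq0.
have [j hj] : exists j : 'I_n, forall i, c <= d 0 i -> i = j.
  case: (pickP [pred i | c <= d 0 i]) => [j0 hj0 | h0].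
    exists j0 => i hi; apply: hJ; by rewrite inE.
  by exists (Ordinal n0) => i hi; move: (h0 i); rewrite /= hi.
set a := (u *m P^t*) 0 j; set b := (w *m P^t*) 0 j.
have [al [be [nz hab]]] : exists al be : C, ((al != 0) || (be != 0)) /\ al * a + be * b = 0.
  case: (boolP ((a == 0) && (b == 0))) => [/andP[/eqP -> /eqP ->]|hab].
    by exists 1, 0; rewrite oner_eq0 !mulr0 addr0.
  exists b, (- a); split; first by move: hab; rewrite negb_and oppr_eq0 orbC.
  by rewrite mulNr mulrC subrr.
set x := al *: u + be *: w.
have Punit := unitarymx_unit Pun.
have iP := invmx_unitary Pun.
have PP : P^t* *m P = 1%:M by rewrite -iP mulVmx.
set y := x *m P^t*.
have yj : y 0 j = 0.
  have e : forall (U W : 'rV[C]_n), (al *: U + be *: W) 0 j = al * U 0 j + be * W 0 j.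
    by move=> U W; rewrite !mxE.
  by rewrite /y /x mulmxDl -!scalemxAl e.
have ynz : y != 0.
  apply/negP => /eqP y0.
  have x0 : x = 0 by rewrite -[x]mulmx1 -PP mulmxA -/y y0 mul0mx.
  have [al0 be0] := indep _ _ x0.
  by move: nz; rewrite al0 be0 eqxx.
have [i0 yi0] : exists i0, y 0 i0 != 0.
  apply/existsP; apply: contraNT ynz => /existsPn h.
  apply/eqP/rowP => l; rewrite [RHS]mxE; apply/eqP; exact: negbNE (h l).
have i0j : i0 != j by apply: contraNneq yi0 => ->; rewrite yj.
have di0 : d 0 i0 < c.
  rewrite real_ltNge //; apply: contra i0j => /hj ->; exact: eqxx.
have fx : (x *m A *m x^t*) 0 0 = \sum_i d 0 i * (y 0 i * (y 0 i)^*).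
  rewrite hA iP !mulmxA -/y -mulmxA -trCmul -/y mul_mx_diag !mxE.
  by apply: eq_bigr => i _; rewrite !mxE mulrAC mulrC.
have gx : (x *m x^t*) 0 0 = \sum_i y 0 i * (y 0 i)^*.
  rewrite -[x in x *m _]mulmx1 -PP mulmxA -/y -mulmxA -trCmul -/y mxE.
  by apply: eq_bigr => i _; rewrite !mxE.
have low : c * (x *m x^t*) 0 0 <= (x *m A *m x^t*) 0 0.
  have := @qf_expand C n 1%:M u w al be; rewrite !mulmx1 -/x => ->.
  rewrite /x qf_expand fuw fwu guw gwu !mulr0 !addr0 !add0r mulrDr.
  apply: lerD; rewrite mulrCA; apply: ler_wpM2l => //; exact: mul_conjC_ge0.
have high : (x *m A *m x^t*) 0 0 < c * (x *m x^t*) 0 0.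
  rewrite fx gx mulr_sumr (bigD1 i0) //= [X in _ < X](bigD1 i0) //=.
  apply: ltr_leD.
    by rewrite ltr_pM2r // mul_conjC_gt0.
  apply: ler_sum => i ii0.
  case: (eqVneq i j) => [->|ij]; first by rewrite yj mul0r !mulr0.
  apply: ler_wpM2r; first exact: mul_conjC_ge0.
  apply: ltW; rewrite real_ltNge //; apply: contra ij => /hj ->; exact: eqxx.
by move: (lt_le_trans high low); rewrite ltxx.
Qed.
Lemma map_real_trC (R : rcfType) m n (Y : 'M[R]_(m, n)) :
  (map_mx (real_complex R) Y)^t* = map_mx (real_complex R) Y^T.
Proof. by apply/matrixP => i j; rewrite !mxE; exact: conjc_real. Qed.

Lemma real_spectral (R : rcfType) n (H : 'M[R]_n) : H^T = H ->
  exists r : 'I_n -> R, exists P : 'M[R[i]]_n, P \is unitarymx /\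
    map_mx (real_complex R) H = invmx P *m diag_mx (\row_i ((r i)%:C)%C) *m P.
Proof.
move=> Hs; set A := map_mx (real_complex R) H.
have Aherm : A \is hermsymmx.
  apply/is_hermitianmxP; rewrite expr0 scale1r.
  by rewrite /A map_real_trC Hs.
have /orthomx_spectralP Aeq := hermitian_normalmx Aherm.
have /mxOverP dr := hermitian_spectral_diag_real Aherm.
exists (fun i => complex.Re (spectral_diag A 0 i)), (spectralmx A); split.
  exact: spectral_unitarymx.
rewrite {1}Aeq; congr (_ *m diag_mx _ *m _); apply/rowP => i; rewrite mxE.
have := dr 0 i; case: (spectral_diag A 0 i) => re im /=.
by rewrite complex_real => /eqP ->.
Qed.
Lemma spec_prod (R : rcfType) n (H : 'M[R]_n) (r : 'I_n -> R) (P : 'M[R[i]]_n) :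
  P \is unitarymx ->
  map_mx (real_complex R) H = invmx P *m diag_mx (\row_i ((r i)%:C)%C) *m P ->
  char_poly H = \prod_(a <- [seq r i | i <- enum 'I_n]) ('X - a%:P).
Proof.
move=> Pu hH; apply: (map_poly_inj (real_complex R)).
rewrite map_char_poly hH char_poly_conj ?unitarymx_unit // char_poly_diag.
rewrite map_prod_XsubC big_map big_enum /=.
by apply: eq_bigr => i _; rewrite mxE.
Qed.
Lemma card_set_count n (P : pred 'I_n) : #|[set i | P i]| = count P (enum 'I_n).
Proof. rewrite cardsE cardE /enum_mem size_filter count_filter.
by apply: eq_count => i; rewrite /= andbT.
Qed.

Lemma lambda2_bound (R : rcfType) n (H : 'M[R]_n) (z w : 'rV[R]_n) (c : R)
  (p q : 'I_n) (s : seq R) :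
  H^T = H -> char_poly H = \prod_(a <- s) ('X - a%:P) ->
  z 0 p = 1 -> z 0 q = -1 -> w 0 p = 1 -> w 0 q = 1 ->
  (z *m H *m w^T) 0 0 = 0 -> (z *m w^T) 0 0 = 0 ->
  c * (z *m z^T) 0 0 <= (z *m H *m z^T) 0 0 ->
  c * (w *m w^T) 0 0 <= (w *m H *m w^T) 0 0 ->
  c <= eig_desc s 1.
Proof.
move=> Hs hs zp zq wp wq fzw gzw fz fw.
have [r [P [Pu hH]]] := real_spectral _ _ _ Hs.
have e := @spec_prod R n H r P Pu hH.
have pe : perm_eq s [seq r i | i <- enum 'I_n].
  by apply: prod_XsubC_eq; rewrite -e -hs.
apply: eig_desc_ge; rewrite (permP pe) count_map.
set u := map_mx (real_complex R) z; set w' := map_mx (real_complex R) w.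
have qf : forall (X Y : 'rV[R]_n) (M : 'M[R]_n),
    (map_mx (real_complex R) X *m map_mx (real_complex R) M *m (map_mx (real_complex R) Y)^t*) 0 0
    = (real_complex R) ((X *m M *m Y^T) 0 0).
  by move=> X Y M; rewrite map_real_trC -!map_mxM mxE.
have qg : forall (X Y : 'rV[R]_n),
    (map_mx (real_complex R) X *m (map_mx (real_complex R) Y)^t*) 0 0 = (real_complex R) ((X *m Y^T) 0 0).
  by move=> X Y; rewrite map_real_trC -!map_mxM mxE.
have sym1 : forall (X Y : 'rV[R]_n), (X *m H *m Y^T) 0 0 = (Y *m H *m X^T) 0 0.
  move=> X Y; transitivity (((X *m H *m Y^T)^T) 0 0); first by rewrite [RHS]mxE.
  by rewrite !trmx_mul trmxK Hs mulmxA.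
have sym2 : forall (X Y : 'rV[R]_n), (X *m Y^T) 0 0 = (Y *m X^T) 0 0.
  move=> X Y; transitivity (((X *m Y^T)^T) 0 0); first by rewrite [RHS]mxE.
  by rewrite !trmx_mul trmxK.
have := @courant2 _ n _ P _ u w' ((real_complex R) c) Pu hH.
rewrite !qf !qg (sym1 w z) (sym2 w z) fzw gzw rmorph0.
rewrite -!rmorphM !lecR.
have creal : (real_complex R) c \is Num.real by rewrite complex_real.
move=> /(_ _ creal _ erefl erefl erefl erefl fz fw).
have dreal : forall i, (\row_i ((r i)%:C)%C) 0 i \is Num.real.
  by move=> i; rewrite mxE complex_real.
have indep : forall a b, a *: u + b *: w' = 0 -> a = 0 /\ b = 0.
  move=> a b /matrixP h.
  have hp := h 0 p; have hq := h 0 q.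
  rewrite !mxE zp wp rmorph1 !mulr1 in hp.
  rewrite !mxE zq wq rmorphN rmorph1 mulrN1 mulr1 in hq.
  have hb : b *+ 2 = 0.
    have -> : b *+ 2 = (a + b) + (- a + b) by ring.
    by rewrite hp hq addr0.
  have b0 : b = 0 by move: hb; rewrite -mulr_natr => /eqP; rewrite mulf_eq0 pnatr_eq0 orbF => /eqP.
  by split => //; move: hp; rewrite b0 addr0.
move=> /(_ dreal indep); rewrite card_set_count.
congr (_ < _)%N; apply: eq_count => i /=; rewrite mxE lecR.
by [].
Qed.
Lemma split_sum (R : nmodType) n (s : 'I_n -> 'I_n) (N : {set 'I_n}) (F : 'I_n -> R) :
  involutive s -> (forall x, x \in N -> s x \notin N) ->
  \sum_x F x = \sum_(x in N) F x + \sum_(x in N) F (s x)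
               + \sum_(x | (x \notin N) && (s x \notin N)) F x.
Proof.
move=> sK hN; rewrite (bigID (fun x => x \in N)) /= -addrA; congr (_ + _).
rewrite (bigID (fun x => s x \in N)) /=; congr (_ + _).
have sinj : injective s := inv_inj sK.
rewrite (reindex_inj sinj) /=; apply: eq_bigl => x.
rewrite sK; case: (boolP (x \in N)) => hx /=; last by rewrite andbF.
by rewrite (negbTE (hN _ hx)).
Qed.

Lemma deg_split (R : numDomainType) n (e : rel 'I_n) (s : 'I_n -> 'I_n) (N : {set 'I_n}) x :
  involutive s -> (forall x, x \in N -> s x \notin N) ->
  (#|[set z in N :|: s @: N | e x z]|)%:R =
    \sum_(b in N) (e x b)%:R + \sum_(b in N) (e x (s b))%:R :> R.
Proof.
move=> sK hN.
rewrite -sum1_card natr_sum big_mkcond /= (@split_sum _ _ s N _ sK hN).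
have sinj : injective s := inv_inj sK.
rewrite [X in _ + _ + X]big1 ?addr0; last first.
  move=> z /andP[zN szN]; rewrite inE in_setU (negbTE zN) /=.
  case: ifP => //; move=> /andP[/imsetP[b bN zb] _].
  by move: szN; rewrite zb sK bN.
congr (_ + _); apply: eq_bigr => b bN; rewrite !inE ?bN /=.
  by case: (e x b).
by rewrite mem_imset // bN orbT /=; case: (e x (s b)).
Qed.
Lemma e_swap n (e : rel 'I_n) (s : 'I_n -> 'I_n) :
  symmetric e -> involutive s -> (forall a b, e a b -> e (s a) (s b)) ->
  forall x b, e x (s b) = e b (s x).
Proof.
move=> esym sK hom x b; apply/idP/idP => h.
  by move: (hom _ _ h); rewrite sK esym.
by move: (hom _ _ h); rewrite sK esym.
Qed.

Lemma comb_ineq (R : realFieldType) n (e : rel 'I_n) (s : 'I_n -> 'I_n)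
  (N : {set 'I_n}) (v : 'I_n) (y : 'I_n -> R) (Q : R) :
  symmetric e -> involutive s -> (forall a b, e a b -> e (s a) (s b)) ->
  (forall x, x \in N -> s x \notin N) -> v \in N ->
  (forall x, 0 <= y x) -> y v = 1 ->
  (forall x, x \in N -> x != v -> y x != 0 ->
     exists2 p, p \in N & e x p && (Q * y x <= y p)) ->
  (forall b, b \in N -> b != v -> e v (s b) -> y b = 0) ->
  let NN := \sum_(x in N) \sum_(b in N) (e x b)%:R * (y x * y b) in
  let CC := \sum_(x in N) \sum_(b in N) (e x (s b))%:R * (y x * y b) in
  let d := fun x => (#|[set z in N :|: s @: N | e x z]|)%:R : R in
  Q * \sum_(x in N | x != v) y x ^+ 2 - 1
     - \sum_(x in N | x != v) (d x - 1) * y x ^+ 2 <= NN - CC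
  /\ 0 <= \sum_(x in N | x != v) (d x - 1) * y x ^+ 2.
Proof.
move=> esym sK hom hN vN y0 yv hpar hvv NN CC d.
have sw := @e_swap n e s esym sK hom.
pose nx x : R := \sum_(b in N) (e x b)%:R.
pose kx x : R := \sum_(b in N) (e x (s b))%:R.
have dE : forall x, d x = nx x + kx x.
  by move=> x; rewrite /d (@deg_split _ _ e s N x sK hN).
have kx0 : forall x, 0 <= kx x.
  by move=> x; apply: sumr_ge0 => b _; exact: ler0n.
have nx1 : forall x, x \in N -> x != v -> y x != 0 -> 1 <= nx x.
  move=> x xN xv yx; have [p pN /andP[exp _]] := hpar x xN xv yx.
  rewrite /nx (bigD1 p) //= exp lerDl; apply: sumr_ge0 => b _; exact: ler0n.
have dterm : forall x, x \in N -> x != v -> 0 <= (d x - 1) * y x ^+ 2.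
  move=> x xN xv; case: (eqVneq (y x) 0) => [->|yx].
    by rewrite expr0n mulr0.
  apply: mulr_ge0; last exact: sqr_ge0.
  by rewrite dE subr_ge0 (le_trans (nx1 _ xN xv yx)) // lerDl.
split; last by apply: sumr_ge0 => x /andP[xN xv]; exact: dterm.
have NNx : forall x, x \in N -> 0 <= \sum_(b in N) (e x b)%:R * (y x * y b).
  move=> x _; apply: sumr_ge0 => b _; apply: mulr_ge0; [exact: ler0n|exact: mulr_ge0].
have NNlow : \sum_(x in N | x != v) (Q * y x ^+ 2 - (nx x - 1) * y x ^+ 2) <= NN.
  rewrite /NN [X in _ <= X](bigD1 v) //= -[X in X <= _]add0r.
  apply: lerD; first exact: NNx.
  apply: ler_sum => x /andP[xN xv].
  case: (eqVneq (y x) 0) => [->|yx].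
    by rewrite expr0n !mulr0 subr0; apply: sumr_ge0 => b _; rewrite mul0r mulr0.
  have [p pN /andP[exp hp]] := hpar x xN xv yx.
  rewrite (bigD1 p) //= exp mul1r.
  have h1 : Q * y x ^+ 2 <= y x * y p.
    by rewrite expr2 mulrA [Q * _]mulrC -mulrA ler_wpM2l.
  have h2 : 0 <= (nx x - 1) * y x ^+ 2.
    by apply: mulr_ge0; [rewrite subr_ge0; exact: nx1|exact: sqr_ge0].
  apply: le_trans (_ : Q * y x ^+ 2 <= _); first by rewrite lerBlDr lerDl.
  rewrite -[X in X <= _]addr0; apply: lerD => //.
  apply: sumr_ge0 => b _; apply: mulr_ge0; [exact: ler0n|exact: mulr_ge0].
pose yy x := if x == v then 0 else y x.
have Tb : forall x b, x \in N -> b \in N ->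
    (e x (s b))%:R * (y x * y b) <=
    ((x == v) && (b == v))%:R * (e v (s v))%:R
    + (e x (s b))%:R * ((yy x ^+ 2 + yy b ^+ 2) / 2).
  move=> x b xN bN; rewrite /yy.
  case: (eqVneq x v) => [->|xv]; case: (eqVneq b v) => [->|bv] /=.
  - by rewrite yv !mulr1 expr0n /= add0r mul0r mulr0 addr0 mul1r.
  - rewrite mul0r add0r expr0n /= add0r.
    case evb: (e v (s b)); last by rewrite !mul0r.
    by rewrite (hvv b bN bv evb) !mulr0 mul1r; apply: divr_ge0 => //; exact: sqr_ge0.
  - rewrite mul0r add0r expr0n /= addr0.
    case exv: (e x (s v)); last by rewrite !mul0r.
    rewrite sw in exv.
    by rewrite (hvv x xN xv exv) !mul0r mulr0 mul1r; apply: divr_ge0 => //; exact: sqr_ge0.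
  - rewrite mul0r add0r; apply: ler_wpM2l; first exact: ler0n.
    rewrite ler_pdivlMr // mulr2n mulrDr mulr1.
    have := sqr_ge0 (y x - y b); rewrite sqrrB.
    set A := y x ^+ 2; set B := y b ^+ 2; set D := y x * y b.
    move=> h; have : 0 <= A + B - D *+ 2 by rewrite addrAC.
    by rewrite subr_ge0 mulr2n.
have CCup : CC <= 1 + \sum_(x in N | x != v) kx x * y x ^+ 2.
  apply: le_trans (_ : \sum_(x in N) \sum_(b in N)
     (((x == v) && (b == v))%:R * (e v (s v))%:R
      + (e x (s b))%:R * ((yy x ^+ 2 + yy b ^+ 2) / 2)) <= _).
    by apply: ler_sum => x xN; apply: ler_sum => b bN; exact: Tb.
  under eq_bigr do rewrite big_split /=.
  rewrite big_split /=.
  have S1 : \sum_(x in N) \sum_(b in N) ((x == v) && (b == v))%:R * (e v (s v))%:R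
            = (e v (s v))%:R :> R.
    rewrite (bigD1 v) //= [X in _ + X]big1; last first.
      move=> x /andP[_ xv]; apply: big1 => b _; by rewrite (negbTE xv) mul0r.
    rewrite addr0 (bigD1 v) //= big1; last first.
      by move=> b /andP[_ bv]; rewrite (negbTE bv) andbF mul0r.
    by rewrite eqxx mul1r addr0.
  have S2 : \sum_(x in N) \sum_(b in N) (e x (s b))%:R * ((yy x ^+ 2 + yy b ^+ 2) / 2)
            = \sum_(x in N | x != v) kx x * y x ^+ 2 :> R.
    transitivity (\sum_(x in N) \sum_(b in N) ((e x (s b))%:R * yy x ^+ 2 / 2)
                 + \sum_(x in N) \sum_(b in N) ((e x (s b))%:R * yy b ^+ 2 / 2)).
      rewrite -big_split /=; apply: eq_bigr => x _; rewrite -big_split /=.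
      by apply: eq_bigr => b _; rewrite mulrDl mulrDr !mulrA.
    rewrite [X in _ + X]exchange_big /=.
    have -> : \sum_(j in N) \sum_(i in N) (e i (s j))%:R * yy j ^+ 2 / 2
            = \sum_(x in N) \sum_(b in N) ((e x (s b))%:R * yy x ^+ 2 / 2) :> R.
      by apply: eq_bigr => x _; apply: eq_bigr => b _; rewrite sw.
    rewrite -mulr2n.
    transitivity (\sum_(x in N) kx x * yy x ^+ 2).
      rewrite -sumrMnl; apply: eq_bigr => x _; rewrite -sumrMnl /kx mulr_suml.
      apply: eq_bigr => b _.
      by rewrite -(mulr_natr (_ / 2) 2) -mulrA mulVf ?pnatr_eq0 // mulr1.
    rewrite (bigD1 v) //= /yy eqxx expr0n /= mulr0 add0r.
    apply: eq_bigr => x /andP[_ xv]; by rewrite (negbTE xv).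
  rewrite S1 S2 lerD2r; by case: (e v (s v)).
have e1 : Q * \sum_(x in N | x != v) y x ^+ 2 - 1
     - \sum_(x in N | x != v) (d x - 1) * y x ^+ 2 =
   \sum_(x in N | x != v) (Q * y x ^+ 2 - (nx x - 1) * y x ^+ 2)
   - \sum_(x in N | x != v) kx x * y x ^+ 2 - 1.
  rewrite mulr_sumr addrAC -sumrB -sumrB; congr (_ - _).
  by apply: eq_bigr => x _; rewrite dE; ring.
rewrite e1; move: NNlow CCup.
set A := \sum_(x in N | x != v) _; set K := \sum_(x in N | x != v) _.
move=> h1 h2; lra.
Qed.
Lemma dist_size n (e : rel 'I_n) a x : (dist e a x <= n)%N.
Proof. by rewrite /dist -[X in (_ <= X)%N](size_iota 0 n) find_size. Qed.

Lemma ball_sub n (e : rel 'I_n) k k' a : (k <= k')%N -> ball e k a \subset ball e k' a.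
Proof.
move=> /subnK <-; elim: (k' - k)%N => [|m IH] //=.
by apply: subset_trans IH _; rewrite subsetUl.
Qed.

Lemma ball_self n (e : rel 'I_n) k a : a \in ball e k a.
Proof. by apply: (subsetP (@ball_sub n e 0 k a (leq0n k))); rewrite /= inE. Qed.

Lemma dist_le n (e : rel 'I_n) a x k : x \in ball e k a -> (dist e a x <= k)%N.
Proof.
move=> hx; case: (ltnP k n) => kn; last first.
  by apply: leq_trans kn; rewrite /dist -[X in (_ <= X)%N](size_iota 0 n) find_size.
rewrite leqNgt; apply/negP => /(before_find 0%N).
by rewrite nth_iota // add0n hx.
Qed.


Lemma dist_in n (e : rel 'I_n) a x : (dist e a x < n)%N -> x \in ball e (dist e a x) a.
Proof.
move=> h; have h' : (dist e a x < size (iota 0 n))%N by rewrite size_iota.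
rewrite /dist -has_find in h'.
by have := nth_find 0%N h'; rewrite nth_iota.
Qed.

Lemma dist_min n (e : rel 'I_n) a x i : (i < dist e a x)%N -> x \notin ball e i a.
Proof.
move=> h; have := before_find 0%N h; rewrite nth_iota ?add0n => [->//|].
exact: leq_trans h (dist_size _ e a x).
Qed.

Lemma dist0 n (e : rel 'I_n) a x : dist e a x = 0%N -> x = a.
Proof.
move=> h; have n0 : (0 < n)%N := leq_ltn_trans (leq0n _) (ltn_ord a).
have := @dist_in n e a x; rewrite h => /(_ n0).
by rewrite /= inE => /eqP.
Qed.

Lemma dist_self n (e : rel 'I_n) a : dist e a a = 0%N.
Proof. by apply/eqP; rewrite -leqn0; apply: dist_le; rewrite /= inE. Qed.

Lemma ball_sig n (e : rel 'I_n) (s : 'I_n -> 'I_n) :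
  (forall a b, e a b -> e (s a) (s b)) ->
  forall k a x, x \in ball e k a -> s x \in ball e k (s a).
Proof.
move=> hom; elim=> [|k IH] a x /=.
  by rewrite !inE => /eqP ->.
rewrite !inE; case/orP => [hx|]; first by rewrite IH.
case/existsP => w /andP[wb ew].
apply/orP; right; apply/existsP; exists (s w); rewrite IH //=; exact: hom.
Qed.

Lemma dist_step n (e : rel 'I_n) a x p : e p x -> (dist e a x <= (dist e a p).+1)%N.
Proof.
move=> epx; case: (ltnP (dist e a p) n) => hp.
  apply: dist_le => /=; rewrite !inE; apply/orP; right.
  by apply/existsP; exists p; rewrite epx (@dist_in n e a p hp).
apply: leq_trans (dist_size _ e a x) _; apply: leq_trans hp _; exact: leqnSn.
Qed.
Lemma y_props (R : realFieldType) n (e : rel 'I_n) (s : 'I_n -> 'I_n) (v : 'I_n)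
  (Q : R) (N : {set 'I_n}) :
  symmetric e -> involutive s -> (forall a b, e a b -> e (s a) (s b)) ->
  s v != v -> 1 <= Q ->
  (forall x, s x != x -> (dist e v x < dist e (s v) x)%N -> x \in N) ->
  let y := fun x => if (dist e v x < dist e (s v) x)%N then Q ^- dist e v x else 0 in
  [/\ forall x, 0 <= y x, y v = 1,
   (forall x, x \in N -> x != v -> y x != 0 ->
      exists2 p, p \in N & e x p && (Q * y x <= y p)) &
   (forall b, b \in N -> b != v -> e v (s b) -> y b = 0)].
Proof.
move=> esym sK hom sv Q1 hclose y.
have Q0 : 0 < Q by apply: lt_le_trans Q1; exact: ltr01.
split.
- by move=> x; rewrite /y; case: ifP => // _; rewrite invr_ge0 exprn_ge0 // ltW.
- rewrite /y dist_self lt0n; case: eqP => [/dist0 h|_]; last by rewrite expr0 invr1.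
  by move: sv; rewrite -h eqxx.
- move=> x xN xv; rewrite /y; case: ifP => hlt; last by rewrite eqxx.
  move=> _; set d := dist e v x.
  have dn : (d < n)%N by apply: leq_trans hlt (dist_size _ _ _ _).
  have xin := @dist_in n e v x dn.
  have d0 : d != 0%N by apply/negP => /eqP /dist0 hx; rewrite hx eqxx in xv.
  have [d' dE] : exists d', d = d'.+1 by case: (d) d0 => [|d'] // _; exists d'.
  move: xin; rewrite -/d dE /= !inE.
  case/orP => [hx|].
    by have := @dist_min n e v x d'; rewrite -/d dE ltnSn hx => /(_ isT).
  case/existsP => p /andP[pb epx].
  rewrite -/d dE in hlt.
  have dp : (dist e v p <= d')%N by apply: dist_le.
  have dsx := @dist_step n e (s v) x p epx.
  have hp : (dist e v p < dist e (s v) p)%N.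
    by apply: leq_ltn_trans dp _; rewrite -ltnS (leq_trans hlt dsx).
  have sp : s p != p.
    have pn : (dist e v p < n)%N by apply: leq_trans hp (dist_size _ _ _ _).
    apply/negP => /eqP spp; move: hp.
    have := @ball_sig n e s hom _ v p (@dist_in n e v p pn).
    by rewrite spp => /dist_le; rewrite leqNgt => /negbTE ->.
  exists p; first exact: hclose.
  rewrite esym epx /= hp.
  rewrite exprS invfM mulrA mulfV ?gt_eqF // mul1r.
  rewrite lef_pV2 ?posrE ?exprn_gt0 //; exact: ler_weXn2l.
- move=> b bN bv evb; rewrite /y; case: ifP => // hlt.
  have e2 : e (s v) b by move: (hom _ _ evb); rewrite sK.
  have : (dist e (s v) b <= 1)%N.
    apply: dist_le => /=; rewrite !inE; apply/orP; right.
    by apply/existsP; exists (s v); rewrite !inE eqxx e2.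
  move=> h1; have : dist e v b = 0%N.
    by apply/eqP; rewrite -leqn0 -ltnS (leq_trans hlt h1).
  by move=> /dist0 bvv; move: bv; rewrite bvv eqxx.
Qed.
Lemma bil (R : comNzRingType) n (X Y : 'rV[R]_n) (M : 'M[R]_n) :
  (X *m M *m Y^T) 0 0 = \sum_i X 0 i * \sum_j M i j * Y 0 j.
Proof.
rewrite -mulmxA mxE; apply: eq_bigr => i _; congr (_ * _).
by rewrite mxE; apply: eq_bigr => j _; rewrite mxE.
Qed.

Lemma lin (R : comNzRingType) n (X Y : 'rV[R]_n) :
  (X *m Y^T) 0 0 = \sum_i X 0 i * Y 0 i.
Proof. by rewrite mxE; apply: eq_bigr => i _; rewrite mxE. Qed.

Lemma sum_pair (R : comNzRingType) n (F : 'I_n -> R) (v v' : 'I_n) : v != v' ->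
  \sum_i ((i == v) || (i == v'))%:R * F i = F v + F v'.
Proof.
move=> vv; rewrite (bigD1 v) //= eqxx mul1r; congr (_ + _).
rewrite (bigD1 v') /=; last by rewrite eq_sym.
rewrite eqxx orbT mul1r big1 ?addr0 // => i /andP[iv iv'].
by rewrite (negbTE iv) (negbTE iv') mul0r.
Qed.
Theorem theorem5 (R : rcfType) (n : nat) (e : rel 'I_n) (sigma : 'I_n -> 'I_n)
  (v : 'I_n) (Q : R) (N : {set 'I_n}) :
  simple_graph e -> connected_graph e -> graph_involution e sigma ->
  sigma v != v ->
  2 * (max_degree e)%:R < Q -> 1 <= Q ->
  (* N contains exactly one vertex of each pair {x, x'} with x' <> x, and no fixed vertex *)
  (forall x, x \in N -> sigma x != x) ->
  (forall x, sigma x != x -> (x \in N) (+) (sigma x \in N)) ->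
  v \in N ->
  (forall x, sigma x != x -> (dist e v x < dist e (sigma v) x)%N -> x \in N) ->
  let y := fun x : 'I_n =>
    if (dist e v x < dist e (sigma v) x)%N then Q ^- dist e v x else 0 in
  let NsN := N :|: (sigma @: N) in
  (exists s, is_spectrum (Hmx e sigma v Q) s) /\
  (forall s, is_spectrum (Hmx e sigma v Q) s ->
     Q - (1 + \sum_(x in N | x != v) ((deg_in e NsN x)%:R - 1) * y x ^+ 2)
           / (\sum_(x in N) y x ^+ 2)
     <= eig_desc s 1).
Proof.
move=> [esym eirr] _ [sK hom] sv _ Q1 hNfix hxor vN hclose y NsN.
have sinj : injective sigma := inv_inj sK.
have hN : forall x, x \in N -> sigma x \notin N.
  by move=> x xN; have := hxor x (hNfix x xN); rewrite xN addTb.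
have svN : sigma v \notin N := hN v vN.
have vsv : v != sigma v by rewrite eq_sym.
set H := Hmx e sigma v Q.
have HE : forall i j, H i j = (e i j)%:R + ((i == j) && ((i == v) || (i == sigma v)))%:R * Q.
  by move=> i j; rewrite /H /Hmx /adj_mx !mxE.
have Hs : H^T = H.
  apply/matrixP => i j; rewrite mxE !HE esym; case: (eqVneq i j) => [->|] //.
split.
  have [r [P [Pu hH]]] := real_spectral _ _ _ Hs.
  by exists [seq r i | i <- enum 'I_n]; exact: (@spec_prod R n H r P Pu hH).
move=> s hs.
have [y0 yv ypar yvv] : [/\ forall x, 0 <= y x, y v = 1,
   (forall x, x \in N -> x != v -> y x != 0 ->
      exists2 p, p \in N & e x p && (Q * y x <= y p)) &
   (forall b, b \in N -> b != v -> e v (sigma b) -> y b = 0)]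
  := @y_props R n e sigma v Q N esym sK hom sv Q1 hclose.
pose z := \row_x (if x \in N then y x else if sigma x \in N then - y (sigma x) else 0) : 'rV[R]_n.
pose w := \row_x ((x == v) || (x == sigma v))%:R : 'rV[R]_n.
have zv : z 0 v = 1 by rewrite mxE vN.
have zsv : z 0 (sigma v) = -1 by rewrite mxE (negbTE svN) sK vN yv.
have wv : w 0 v = 1 by rewrite mxE eqxx.
have wsv : w 0 (sigma v) = 1 by rewrite mxE eqxx orbT.
have zsig : forall x, z 0 (sigma x) = - z 0 x.
  move=> x; rewrite !mxE sK; case: (boolP (x \in N)) => xN.
    by rewrite (negbTE (hN _ xN)).
  case: (boolP (sigma x \in N)) => sxN; first by rewrite opprK.
  by rewrite oppr0.
have wsig : forall x, w 0 (sigma x) = w 0 x.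
  move=> x; rewrite !mxE -[sigma x == v](inj_eq sinj) sK (inj_eq sinj) orbC //.
have Hsig : forall i j, H (sigma i) (sigma j) = H i j.
  move=> i j; rewrite !HE (inj_eq sinj).
  have -> : e (sigma i) (sigma j) = e i j.
    apply/idP/idP => h; last exact: hom.
    by move: (hom _ _ h); rewrite !sK.
  by rewrite -[sigma i == v](inj_eq sinj) sK (inj_eq sinj) [(i == sigma v) || _]orbC.
set K := \sum_(x in N | x != v) _.
set den := \sum_(x in N) _.
have denE : den = 1 + \sum_(x in N | x != v) y x ^+ 2.
  by rewrite /den (bigD1 v) //= yv expr1n.
have K0 : 0 <= K.
  have [_ hK] : (Q * \sum_(x in N | x != v) y x ^+ 2 - 1 - K <=
        \sum_(x in N) \sum_(b in N) (e x b)%:R * (y x * y b)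
        - \sum_(x in N) \sum_(b in N) (e x (sigma b))%:R * (y x * y b)) /\ 0 <= K
    := @comb_ineq R n e sigma N v y Q esym sK hom hN vN y0 yv ypar yvv.
  exact: hK.
have den0 : 0 < den.
  rewrite denE; apply: (lt_le_trans ltr01); rewrite lerDl.
  by apply: sumr_ge0 => x _; exact: sqr_ge0.
apply: (@lambda2_bound R n H z w _ v (sigma v) s Hs hs zv zsv wv wsv).
- rewrite bil; set S := \sum_i _.
  have hS : S = - S.
    rewrite {1}/S (reindex_inj sinj) /= -sumrN; apply: eq_bigr => i _.
    rewrite (reindex_inj sinj) /= zsig mulNr; congr (- (_ * _)).
    by apply: eq_bigr => j _; rewrite Hsig wsig.
  lra.
- rewrite lin; set S := \sum_i _.
  have hS : S = - S.
    rewrite {1}/S (reindex_inj sinj) /= -sumrN; apply: eq_bigr => i _.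
    by rewrite zsig wsig mulNr.
  lra.
- have [hc _] : (Q * \sum_(x in N | x != v) y x ^+ 2 - 1 - K <=
        \sum_(x in N) \sum_(b in N) (e x b)%:R * (y x * y b)
        - \sum_(x in N) \sum_(b in N) (e x (sigma b))%:R * (y x * y b)) /\ 0 <= K
    := @comb_ineq R n e sigma N v y Q esym sK hom hN vN y0 yv ypar yvv.
  move: hc.
  set NN := \sum_(x in N) \sum_(b in N) _.
  set CC := \sum_(x in N) \sum_(b in N) _.
  move=> hc.
  have zz : (z *m z^T) 0 0 = den + den.
    rewrite lin (@split_sum R n sigma N _ sK hN).
    rewrite [X in _ + X]big1 ?addr0; last first.
      by move=> x /andP[xN sxN]; rewrite mxE (negbTE xN) (negbTE sxN) mulr0.
    congr (_ + _); apply: eq_bigr => x xN; rewrite ?zsig ?mulrNN mxE xN expr2 //.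
  have zHz : (z *m H *m z^T) 0 0 = (NN - CC + Q) + (NN - CC + Q).
    have Hzsig : forall x, \sum_j H (sigma x) j * z 0 j = - \sum_j H x j * z 0 j.
      move=> x; rewrite (reindex_inj sinj) /= -sumrN; apply: eq_bigr => j _.
      by rewrite Hsig zsig mulrN.
    have Hx : forall x, x \in N -> \sum_j H x j * z 0 j =
        \sum_(b in N) (e x b)%:R * y b + (x == v)%:R * Q * y x
        - \sum_(b in N) (e x (sigma b))%:R * y b.
      move=> x xN; rewrite (@split_sum R n sigma N _ sK hN).
      rewrite [X in _ + X]big1 ?addr0; last first.
        by move=> b /andP[bN sbN]; rewrite [z 0 b]mxE (negbTE bN) (negbTE sbN) mulr0.
      have xsv : x != sigma v by apply: contraNneq svN => <-.
      congr (_ + _).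
        transitivity (\sum_(b in N) ((e x b)%:R * y b
            + ((x == b) && ((x == v) || (x == sigma v)))%:R * Q * y b)).
          by apply: eq_bigr => b bN; rewrite [z 0 b]mxE bN HE mulrDl.
        rewrite big_split /=; congr (_ + _).
        rewrite (bigD1 x) //= big1 ?addr0; last first.
          by move=> b /andP[_ bx]; rewrite eq_sym (negbTE bx) mul0r mul0r.
        by rewrite eqxx (negbTE xsv) orbF.
      rewrite -sumrN; apply: eq_bigr => b bN.
      rewrite zsig [z 0 b]mxE bN HE mulrN.
      have -> : (x == sigma b) = false.
        by apply/negP => /eqP xb; move: xN; rewrite xb (negbTE (hN _ bN)).
      by rewrite mul0r addr0.
    rewrite bil (@split_sum R n sigma N _ sK hN).
    rewrite [X in _ + X]big1 ?addr0; last first.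
      by move=> x /andP[xN sxN]; rewrite [z 0 x]mxE (negbTE xN) (negbTE sxN) mul0r.
    have main : \sum_(x in N) z 0 x * \sum_j H x j * z 0 j = NN - CC + Q.
      transitivity (\sum_(x in N) (\sum_(b in N) (e x b)%:R * (y x * y b)
          + (x == v)%:R * Q * (y x * y x)
          - \sum_(b in N) (e x (sigma b))%:R * (y x * y b))).
        apply: eq_bigr => x xN; rewrite Hx // [z 0 x]mxE xN mulrBr mulrDr !mulr_sumr.
        congr (_ + _ - _).
        - by apply: eq_bigr => b _; rewrite mulrCA.
        - by rewrite mulrCA mulrA.
        - by apply: eq_bigr => b _; rewrite mulrCA.
      rewrite sumrB big_split /= -/NN -/CC.
      rewrite (bigD1 v) //= big1 ?addr0; last first.
        by move=> x /andP[_ xv]; rewrite (negbTE xv) !mul0r.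
      by rewrite eqxx yv !mulr1 mul1r; ring.
    rewrite main; congr (_ + _); rewrite -main.
    by apply: eq_bigr => x xN; rewrite zsig Hzsig mulrNN.
  set t := (1 + K) / den.
  have tden : t * den = 1 + K by rewrite /t divfK // gt_eqF.
  rewrite zz zHz mulrDr mulrBl tden denE mulrDr mulr1.
  move: hc; set S' := \sum_(x in N | x != v) _; move=> hc.
  lra.
- have outer : forall G : 'I_n -> R, \sum_i w 0 i * G i = G v + G (sigma v).
    by move=> G; rewrite -(@sum_pair R n G v (sigma v) vsv); apply: eq_bigr => i _; rewrite mxE.
  have inner : forall i, \sum_j H i j * w 0 j = H i v + H i (sigma v).
    move=> i; rewrite -(@sum_pair R n (fun j => H i j) v (sigma v) vsv).
    by apply: eq_bigr => j _; rewrite [w 0 j]mxE mulrC.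
  rewrite bil lin.
  have -> : \sum_i w 0 i * \sum_j H i j * w 0 j
          = \sum_i w 0 i * (H i v + H i (sigma v)) by apply: eq_bigr => i _; rewrite inner.
  have o1 := outer (fun i => H i v + H i (sigma v)); rewrite /= in o1; rewrite o1.
  have o2 := outer (fun i => w 0 i); rewrite /= in o2; rewrite o2 wv wsv.
  rewrite !HE !eqxx (negbTE vsv) eq_sym (negbTE vsv) !eirr /=.
  set t := (1 + K) / den.
  have t0 : 0 <= t by apply: divr_ge0 => //; [apply: addr_ge0 | exact: ltW].
  have e1 : 0 <= (e v (sigma v))%:R :> R by exact: ler0n.
  have e2 : 0 <= (e (sigma v) v)%:R :> R by exact: ler0n.
  move: t0 e1 e2; set a := (e v (sigma v))%:R; set b := (e (sigma v) v)%:R.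
  move=> t0 e1 e2; lra.
Qed.
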